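(* (i) For every $\epsilon>0$ there exist $\beta,\gamma\in\mathcal{I}_\alpha$ with $d_H(\beta,\gamma)<\epsilon$ and $d_\alpha(\beta,\gamma)>1/\epsilon$. (ii) For all $\beta,\gamma\in\mathcal{I}_\alpha$, $d_H'(\beta,\gamma)\le d_\alpha(\beta,\gamma)$. (iii) The metrics $d_H$ and $d_H'$ generate the same topology on $\mathcal{I}_H$.
   Context: Fix $\alpha\in(0,1)$. An interval partition is a set $\beta$ of disjoint open subintervals (blocks) of some interval $[0,L]$ that cover $[0,L]$ up to a Lebesgue-null set; write $\|\beta\|:=L$ and $\mathrm{Leb}(U)$ for the length of a block $U$. $\mathcal{I}_H$ is the set of all interval partitions. For $\beta\in\mathcal{I}_H$ let $C_\beta:=[0,\|\beta\|]\setminus\bigcup_{U\in\beta}U$, and $d_H(\beta,\gamma)$ the Hausdorff distance between $C_\beta$ and $C_\gamma$. $\beta$ has the $\alpha$-diversity property if for every $t\in[0,\|\beta\|]$ the limit $\mathscr{D}_\beta(t):=\Gamma(1-\alpha)\lim_{h\downarrow0}h^\alpha\#\{(a,b)\in\beta\colon b-a>h,\ b\le t\}$ exists; $\mathcal{I}_\alpha$ is the set of such partitions. For $U\in\beta$, $\mathscr{D}_\beta(U):=\mathscr{D}_\beta(t)$ for $t\in U$; $\mathscr{D}_\beta(\infty):=\mathscr{D}_\beta(\|\beta\|)$. A correspondence between $\beta,\gamma$ is a finite sequence $(U_j,V_j)_{j\in[n]}$, $n\ge0$, of pairs in $\beta\times\gamma$ with $(U_j)_j$ and $(V_j)_j$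 each strictly increasing in left-to-right order. Its Hausdorff distortion is the maximum of (i') $\sum_{j}|\mathrm{Leb}(U_j)-\mathrm{Leb}(V_j)|+\|\beta\|-\sum_j\mathrm{Leb}(U_j)$ and (ii') $\sum_{j}|\mathrm{Leb}(U_j)-\mathrm{Leb}(V_j)|+\|\gamma\|-\sum_j\mathrm{Leb}(V_j)$; for $\beta,\gamma\in\mathcal{I}_\alpha$ its $\alpha$-distortion is the maximum of (i'), (ii'), $\sup_j|\mathscr{D}_\beta(U_j)-\mathscr{D}_\gamma(V_j)|$ and $|\mathscr{D}_\beta(\infty)-\mathscr{D}_\gamma(\infty)|$. $d_H'$ and $d_\alpha$ are the infima over all correspondences of the Hausdorff distortion and the $\alpha$-distortion, respectively. *)

(* Defs.v *)
From HB Require Import structures.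
From mathcomp Require Import all_boot all_order all_algebra.
From mathcomp Require Import all_classical all_reals all_analysis.
From mathcomp Require Import finmap.
Set Implicit Arguments. Unset Strict Implicit. Unset Printing Implicit Defensive.
Import Order.TTheory GRing.Theory Num.Theory.
Import numFieldNormedType.Exports.
Local Open Scope classical_set_scope.
Local Open Scope ring_scope.

Definition Gamma (R : realType) (s : R) : R :=
  fine (\int[@lebesgue_measure R]_(x in `]0%R, +oo[%classic)
          ((x `^ (s - 1)) * expR (- x))%:E).

Definition oint (R : realType) (p : R * R) : set R := `]p.1, p.2[%classic.

Definition blen (R : realType) (p : R * R) : R := p.2 - p.1.

Record IP (R : realType) := mkIP {
  ipL : R;
  blocks : set (R * R);
  ipL_ge0 : 0 <= ipL;
  blocks_sub : forall p, blocks p -> 0 <= p.1 /\ p.1 < p.2 /\ p.2 <= ipL;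
  blocks_disj : forall p q, blocks p -> blocks q -> p <> q ->
                  oint p `&` oint q = set0;
  blocks_cover : (@lebesgue_measure R).-negligible
                   (`[0, ipL]%classic `\` \bigcup_(p in blocks) oint p)
}.


Definition Cset (R : realType) (b : IP R) : set R :=
  `[0, ipL b]%classic `\` \bigcup_(p in blocks b) oint p.

Definition hdist_sets (R : realType) (A B : set R) : R :=
  Num.max (sup [set inf [set `|x - y| | y in B] | x in A])
          (sup [set inf [set `|x - y| | x in A] | y in B]).

Definition dH (R : realType) (b g : IP R) : R := hdist_sets (Cset b) (Cset g).

Definition nblocks (R : realType) (b : IP R) (h t : R) : nat :=
  #|` fset_set [set p | blocks b p /\ h < p.2 - p.1 /\ p.2 <= t] |.

Definition div_fun (R : realType) (alpha : R) (b : IP R) (t : R) : R -> R :=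
  fun h => h `^ alpha * (nblocks b h t)%:R.

Definition diverse (R : realType) (alpha : R) (b : IP R) : Prop :=
  forall t, 0 <= t <= ipL b ->
    exists l : R, div_fun alpha b t h @[h --> 0^'+] --> l.

Definition Ddiv (R : realType) (alpha : R) (b : IP R) (t : R) : R :=
  Gamma (1 - alpha) * lim (div_fun alpha b t h @[h --> 0^'+]).

(* D_beta(U) := D_beta(t) for t in U (we take the midpoint of U) *)
Definition Dblock (R : realType) (alpha : R) (b : IP R) (p : R * R) : R :=
  Ddiv alpha b ((p.1 + p.2) / 2).

Definition Dinf (R : realType) (alpha : R) (b : IP R) : R :=
  Ddiv alpha b (ipL b).

Definition corr_lt (R : realType) (p q : (R * R) * (R * R)) : bool :=
  (p.1.1 < q.1.1) && (p.2.1 < q.2.1).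

Definition correspondence (R : realType) (b g : IP R)
    (s : seq ((R * R) * (R * R))) : Prop :=
  (forall j, j \in s -> blocks b j.1 /\ blocks g j.2) /\ sorted (@corr_lt R) s.

Definition dis_sum (R : realType) (s : seq ((R * R) * (R * R))) : R :=
  \sum_(j <- s) `|blen j.1 - blen j.2|.

Definition dis1 (R : realType) (b : IP R) (s : seq ((R * R) * (R * R))) : R :=
  dis_sum s + ipL b - \sum_(j <- s) blen j.1.
Definition dis2 (R : realType) (g : IP R) (s : seq ((R * R) * (R * R))) : R :=
  dis_sum s + ipL g - \sum_(j <- s) blen j.2.

Definition hdis (R : realType) (b g : IP R) (s : seq ((R * R) * (R * R))) : R :=
  Num.max (dis1 b s) (dis2 g s).

(* sup_j |D_beta(U_j) - D_gamma(V_j)| (0 for the empty correspondence) *)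
Definition adis (R : realType) (alpha : R) (b g : IP R)
    (s : seq ((R * R) * (R * R))) : R :=
  Num.max (Num.max (hdis b g s)
     (\big[Num.max/0]_(j <- s) `|Dblock alpha b j.1 - Dblock alpha g j.2|))
     `|Dinf alpha b - Dinf alpha g|.

Definition dH' (R : realType) (b g : IP R) : R :=
  inf [set hdis b g s | s in correspondence b g].

Definition dalpha (R : realType) (alpha : R) (b g : IP R) : R :=
  inf [set adis alpha b g s | s in correspondence b g].

Definition metric_open (T : Type) (R : realType) (d : T -> T -> R)
    (U : set T) : Prop :=
  forall x, U x -> exists e : R, 0 < e /\ forall y, d x y < e -> U y.

(* Main.v *)
Require Import Defs.
From HB Require Import structures.
From mathcomp Require Import all_boot all_order all_algebra.
From mathcomp Require Import all_classical all_reals all_analysis.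
From mathcomp Require Import finmap measurable_realfun.
From mathcomp Require Import ring lra.
Set Implicit Arguments. Unset Strict Implicit. Unset Printing Implicit Defensive.
Import Order.TTheory GRing.Theory Num.Theory.
Import numFieldNormedType.Exports.
Local Open Scope classical_set_scope.
Local Open Scope ring_scope.
Section Basic.
Variable R : realType.
Implicit Types (b g : IP R) (p q : R * R) (x y : R).

Lemma ointP p x : oint p x <-> (p.1 < x < p.2).
Proof. by rewrite /oint /= in_itv. Qed.

Lemma blk_sub b p : blocks b p -> [/\ 0 <= p.1, p.1 < p.2 & p.2 <= ipL b].
Proof. by move=> /blocks_sub [? [? ?]]; split. Qed.

Lemma blk_sep b p q : blocks b p -> blocks b q -> p.1 < q.1 -> p.2 <= q.1.
Proof.
move=> bp bq pq; rewrite leNgt; apply/negP => qp.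
have [_ pl _] := blk_sub bp; have [_ ql _] := blk_sub bq.
have neq : p <> q by move=> e; move: pq; rewrite e ltxx.
have := blocks_disj bp bq neq.
set z := (q.1 + Num.min p.2 q.2) / 2.
have hm : q.1 < Num.min p.2 q.2 by rewrite lt_min qp ql.
have h1 : q.1 < z by rewrite /z ltr_pdivlMr // mulr2n mulrDr mulr1 ltrD2l.
have h2 : z < Num.min p.2 q.2 by rewrite /z ltr_pdivrMr // mulrDr mulr1 ltrD2r.
move: h2; rewrite lt_min => /andP[zp zq].
move/seteqP => [+ _] => /(_ z); apply; split; apply/ointP.
  by rewrite zp (lt_trans pq h1).
by rewrite zq h1.
Qed.

Lemma blk_eq1 b p q : blocks b p -> blocks b q -> p.1 = q.1 -> p = q.
Proof.
move=> bp bq e; apply/eqP; apply/negP => /negP /eqP neq.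
have [_ pl _] := blk_sub bp; have [_ ql _] := blk_sub bq.
have := blocks_disj bp bq neq.
set z := (q.1 + Num.min p.2 q.2) / 2.
have hm : q.1 < Num.min p.2 q.2 by rewrite lt_min -{1}e pl ql.
have h1 : q.1 < z by rewrite /z ltr_pdivlMr // mulr2n mulrDr mulr1 ltrD2l.
have h2 : z < Num.min p.2 q.2 by rewrite /z ltr_pdivrMr // mulrDr mulr1 ltrD2r.
move: h2; rewrite lt_min => /andP[zp zq].
move/seteqP => [+ _] => /(_ z); apply; split; apply/ointP.
  by rewrite zp e h1.
by rewrite zq h1.
Qed.

Lemma blk_neq b p q : blocks b p -> blocks b q -> p <> q ->
  p.2 <= q.1 \/ q.2 <= p.1.
Proof.
move=> bp bq neq; case: (ltgtP p.1 q.1) => h.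
- by apply: or_introl; exact: (blk_sep bp bq h).
- by apply: or_intror; exact: (blk_sep bq bp h).
- by exfalso; apply: neq; exact: (blk_eq1 bp bq h).
Qed.

Lemma CsetP b x : Cset b x <-> (0 <= x <= ipL b /\ forall p, blocks b p -> ~ oint p x).
Proof.
rewrite /Cset; split.
  move=> [+ nb]; rewrite /= in_itv /= => h; split => // p bp px.
  by apply: nb; exists p.
move=> [h nb]; split; first by rewrite /= in_itv.
by move=> [p bp px]; exact: nb bp px.
Qed.

Lemma Cset_end b p : blocks b p -> Cset b p.1 /\ Cset b p.2.
Proof.
move=> bp; have [p0 pl pL] := blk_sub bp.
split; apply/CsetP; split.
- by rewrite p0 /= (le_trans (ltW pl) pL).
- move=> q bq /ointP /andP [h1 h2]; have neq : p <> q.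
    by move=> e; move: h1; rewrite e ltxx.
  case: (blk_neq bp bq neq) => h.
    by move: (lt_trans h1 (lt_le_trans pl h)); rewrite ltxx.
  by move: (lt_le_trans h2 h); rewrite ltxx.
- by rewrite pL andbT (le_trans p0 (ltW pl)).
- move=> q bq /ointP /andP [h1 h2]; have neq : p <> q.
    by move=> e; move: h2; rewrite e ltxx.
  case: (blk_neq bp bq neq) => h.
    by move: (lt_le_trans h1 h); rewrite ltxx.
  by move: (lt_trans (lt_le_trans h2 h) pl); rewrite ltxx.
Qed.

Lemma Cset0 b : Cset b 0.
Proof.
apply/CsetP; split; first by rewrite lexx ipL_ge0.
by move=> q bq /ointP /andP [h1 _]; have [q0 _ _] := blk_sub bq; move: (le_lt_trans q0 h1); rewrite ltxx.
Qed.

Lemma CsetL b : Cset b (ipL b).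
Proof.
apply/CsetP; split; first by rewrite lexx ipL_ge0.
by move=> q bq /ointP /andP [_ h2]; have [_ _ qL] := blk_sub bq; move: (lt_le_trans h2 qL); rewrite ltxx.
Qed.

Lemma Cset_range b x : Cset b x -> 0 <= x <= ipL b.
Proof. by case/CsetP. Qed.

Lemma notC_blk b x : 0 <= x <= ipL b -> ~ Cset b x -> exists p, blocks b p /\ oint p x.
Proof.
move=> hx nC; apply/not_existsP => hn; apply: nC; apply/CsetP; split => // p bp px.
by apply: (hn p).
Qed.

Lemma sum_blen_le_aux b (l : seq (R * R)) a :
  (forall p, p \in l -> blocks b p) ->
  pairwise (fun p q => p.1 < q.1) l -> a <= ipL b ->
  (forall p, p \in l -> a <= p.1) ->
  \sum_(p <- l) blen p <= ipL b - a.
Proof.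
elim: l a => [|p l IH] a hb hs haL ha; first by rewrite big_nil subr_ge0.
rewrite big_cons; move: hs; rewrite pairwise_cons => /andP [/allP hp hs].
have bp : blocks b p by apply: hb; rewrite mem_head.
have [p0 pl pL] := blk_sub bp.
have := IH p.2 (fun q hq => hb q (@mem_behead _ (p :: l) q hq)) hs pL.
have hq : forall q, q \in l -> p.2 <= q.1.
  move=> q ql; apply: (blk_sep bp); first by apply: hb; rewrite inE ql orbT.
  exact: (hp q ql).
move=> /(_ hq) h.
have hap : a <= p.1 by apply: ha; rewrite mem_head.
rewrite /blen; apply: le_trans (lerD (lexx _) h) _.
lra.
Qed.

Lemma sum_blen_le b (l : seq (R * R)) :
  (forall p, p \in l -> blocks b p) ->
  pairwise (fun p q => p.1 < q.1) l ->
  \sum_(p <- l) blen p <= ipL b.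
Proof.
move=> hb hs; have := sum_blen_le_aux hb hs (ipL_ge0 b).
rewrite subr0; apply => p /hb /blk_sub [] //.
Qed.

Lemma corr_lt_trans : transitive (@corr_lt R).
Proof.
move=> y x z /andP [h1 h2] /andP [h3 h4]; apply/andP; split; [exact: (lt_trans h1 h3)|exact: (lt_trans h2 h4)].
Qed.

Lemma corr_pairwise b g s : correspondence b g s -> pairwise (@corr_lt R) s.
Proof. by case=> _ hs; rewrite -(sorted_pairwise (@corr_lt_trans)). Qed.

Lemma corr_sum1 b g s : correspondence b g s ->
  \sum_(j <- s) blen j.1 <= ipL b.
Proof.
move=> hc; rewrite -(big_map fst xpredT (@blen R)); apply: sum_blen_le.
  by move=> p /mapP [j js ->]; case: hc => h _; case: (h j js).
rewrite pairwise_map; apply: sub_pairwise (corr_pairwise hc).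
by move=> x y /andP [].
Qed.

Lemma corr_sum2 b g s : correspondence b g s ->
  \sum_(j <- s) blen j.2 <= ipL g.
Proof.
move=> hc; rewrite -(big_map snd xpredT (@blen R)); apply: sum_blen_le.
  by move=> p /mapP [j js ->]; case: hc => h _; case: (h j js).
rewrite pairwise_map; apply: sub_pairwise (corr_pairwise hc).
by move=> x y /andP [].
Qed.

Lemma dis_sum_ge0 (s : seq ((R * R) * (R * R))) : 0 <= dis_sum s.
Proof. by apply: sumr_ge0 => j _. Qed.

Lemma hdis_ge0 b g s : correspondence b g s -> 0 <= hdis b g s.
Proof.
move=> hc; rewrite /hdis le_max; apply/orP; left.
rewrite /dis1 -addrA addr_ge0 ?dis_sum_ge0 // subr_ge0; exact: corr_sum1 hc.
Qed.

Lemma corr_nil b g : correspondence b g [::].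
Proof. by split. Qed.

End Basic.

Section Mass.
Variable R : realType.
Implicit Types (b g : IP R) (p q : R * R) (x y : R) (P Q : set (R * R)).

Definition ublk P : set R := \bigcup_(p in P) oint p.
Definition mass P : \bar R := (@lebesgue_measure R) (ublk P).

Lemma ublk_meas P : measurable (ublk P).
Proof.
apply: open_measurable; apply: bigcup_open => p _; exact: itv_open.
Qed.

Lemma ublk_meas_in P : ublk P \in measurable.
Proof. by apply/mem_set; exact: ublk_meas. Qed.

Lemma mass_ge0 P : (0 <= mass P)%E.
Proof. exact: measure_ge0. Qed.

Lemma mass_mono P Q : P `<=` Q -> (mass P <= mass Q)%E.
Proof.
move=> PQ; apply: (le_measure (@lebesgue_measure R) (ublk_meas_in P) (ublk_meas_in Q)).
by move=> x [p Pp px]; exists p => //; apply: PQ.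
Qed.

Lemma mass0 : mass set0 = 0%E.
Proof. by rewrite /mass /ublk bigcup_set0 measure0. Qed.

Lemma mass_U b P Q : P `<=` blocks b -> Q `<=` blocks b -> P `&` Q = set0 ->
  mass (P `|` Q) = (mass P + mass Q)%E.
Proof.
move=> Pb Qb PQ; rewrite /mass /ublk bigcup_setU measureU //; try exact: ublk_meas.
apply/seteqP; split => // x [[p Pp px] [q Qq qx]].
have neq : p <> q by move=> e; move/seteqP: PQ => [+ _] => /(_ p); apply; split => //; rewrite e.
have := blocks_disj (Pb _ Pp) (Qb _ Qq) neq.
by move/seteqP => [+ _] => /(_ x); apply.
Qed.

Lemma mass1 b p : blocks b p -> mass [set p] = (blen p)%:E.
Proof.
move=> bp; have [_ pl _] := blk_sub bp.
rewrite /mass /ublk bigcup_set1 /oint lebesgue_measure_itv /= lte_fin pl.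
by rewrite /blen EFinB.
Qed.

Lemma leb_ooitv a c : a <= c -> (@lebesgue_measure R) `]a, c[%classic = (c - a)%:E.
Proof.
move=> ac; rewrite lebesgue_measure_itv /= lte_fin; case: ltP => h.
  by rewrite -EFinD.
have -> : c = a by apply/eqP; rewrite eq_le h ac.
by rewrite subrr.
Qed.

Lemma mass_itv b a c : Cset b a -> Cset b c -> a <= c ->
  mass [set p | blocks b p /\ a <= p.1 /\ p.2 <= c] = (c - a)%:E.
Proof.
move=> Ca Cc ac; rewrite -leb_ooitv //; apply/eqP; rewrite eq_le; apply/andP; split.
  apply: (le_measure (@lebesgue_measure R) (ublk_meas_in _)).
    by apply/mem_set; exact: measurable_itv.
  move=> x [p [bp [ap pc]]] /ointP /andP [h1 h2]; rewrite /= in_itv /=.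
  by rewrite (le_lt_trans ap h1) (lt_le_trans h2 pc).
have [N [mN N0 sN]] := blocks_cover b.
have /andP [_ cL] := Cset_range Cc; have /andP [a0 _] := Cset_range Ca.
set P := [set p | blocks b p /\ a <= p.1 /\ p.2 <= c].
have HU := measureU0 (mu := @lebesgue_measure R) (ublk_meas P) mN N0.
rewrite /mass -HU.
  apply: (le_measure (@lebesgue_measure R)).
  - by apply/mem_set; exact: measurable_itv.
  - by apply/mem_set; apply: measurableU => //; exact: ublk_meas.
  move=> x; rewrite /= in_itv /= => /andP [ax xc].
  have [[q bq qx]|nq] := pselect ((\bigcup_(p in blocks b) oint p) x); last first.
    right; apply: sN; split => //; rewrite /= in_itv /=.
    by rewrite (le_trans a0 (ltW ax)) (le_trans (ltW xc) cL).
  left; exists q => //; split => //.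
  move: (qx) => /ointP /andP [q1 q2].
  have [_ nCa] := (CsetP b a).1 Ca; have [_ nCc] := (CsetP b c).1 Cc.
  split.
    rewrite leNgt; apply/negP => qa; apply: (nCa q bq).
    by apply/ointP; rewrite qa (lt_trans ax q2).
  rewrite leNgt; apply/negP => cq; apply: (nCc q bq).
  by apply/ointP; rewrite cq (lt_trans q1 xc).
Qed.

Lemma mass_all b : mass (blocks b) = (ipL b)%:E.
Proof.
have -> : blocks b = [set p | blocks b p /\ 0 <= p.1 /\ p.2 <= ipL b].
  apply/seteqP; split => p; last by case.
  by move=> bp; have [? _ ?] := blk_sub bp.
by rewrite mass_itv ?subr0 //; [exact: Cset0|exact: CsetL|exact: ipL_ge0].
Qed.

Lemma mass_fin b P : P `<=` blocks b -> mass P = (fine (mass P))%:E.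
Proof.
move=> Pb; rewrite fineK // ge0_fin_numE ?mass_ge0 //.
apply: le_lt_trans (mass_mono Pb) _; rewrite mass_all; exact: ltry.
Qed.

Definition mR P : R := fine (mass P).

Lemma mR_ge0 P : 0 <= mR P.
Proof. exact/fine_ge0/mass_ge0. Qed.

Lemma mR_mono b P Q : Q `<=` blocks b -> P `<=` Q -> mR P <= mR Q.
Proof.
move=> Qb PQ; rewrite -lee_fin /mR -(mass_fin Qb) -(mass_fin (subset_trans PQ Qb)).
exact: mass_mono.
Qed.

Lemma mR_U b P Q : P `<=` blocks b -> Q `<=` blocks b -> P `&` Q = set0 ->
  mR (P `|` Q) = mR P + mR Q.
Proof.
move=> Pb Qb PQ; rewrite /mR (mass_U Pb Qb PQ) (mass_fin Pb) (mass_fin Qb).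
by rewrite -EFinD.
Qed.

Lemma mR_all b : mR (blocks b) = ipL b.
Proof. by rewrite /mR mass_all. Qed.

Lemma mR_itv b a c : Cset b a -> Cset b c -> a <= c ->
  mR [set p | blocks b p /\ a <= p.1 /\ p.2 <= c] = c - a.
Proof. by move=> Ca Cc ac; rewrite /mR mass_itv. Qed.

Lemma mR_list b (l : seq (R * R)) : (forall p, p \in l -> blocks b p) -> uniq l ->
  mR [set` l] = \sum_(p <- l) blen p.
Proof.
elim: l => [|p l IH] hb /=.
  by move=> _; rewrite big_nil /mR (_ : [set` [::]] = set0) ?mass0 //; apply/seteqP; split.
move=> /andP [pl ul]; rewrite big_cons.
have bp : blocks b p by apply: hb; rewrite mem_head.
have hb' : forall q, q \in l -> blocks b q by move=> q ql; apply: hb; rewrite inE ql orbT.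
have -> : [set` p :: l] = [set p] `|` [set` l].
  apply/seteqP; split => q /=; rewrite inE.
    by case/orP => [/eqP ->|ql]; [left|right].
  by case => [->|ql]; [rewrite eqxx|rewrite ql orbT].
rewrite (mR_U (b := b)); first by rewrite (IH hb' ul) /mR (mass1 bp).
- by move=> q ->.
- by move=> q /= ql; apply: hb'.
- apply/seteqP; split => // q [/= -> ql]; by move: pl; rewrite ql.
Qed.

Lemma mR_rest b M Q : M `<=` blocks b -> Q `<=` blocks b -> Q `&` M = set0 ->
  mR Q <= ipL b - mR M.
Proof.
move=> Mb Qb QM; rewrite lerBrDr -(mR_U Qb Mb QM) -(mR_all b).
apply: (mR_mono (b := b)) => //; by move=> p [/Qb|/Mb].
Qed.

End Mass.

Section Gen.
Variable T : Type.

Lemma all_take_find (a : pred T) (s : seq T) : all (predC a) (take (find a s) s).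
Proof. by elim: s => //= x s IH; case: ifP => //= ->. Qed.

Lemma all_drop_find (a : pred T) (r : rel T) (s : seq T) :
  (forall x y, a x -> r x y -> a y) -> pairwise r s -> all a (drop (find a s) s).
Proof.
move=> mono; elim: s => //= x s IH /andP [hx hs]; case: ifP => ax /=; last exact: IH.
rewrite ax /=; apply: (sub_all _ hx) => y; exact: mono ax.
Qed.

End Gen.

Section Dir1.
Variable R : realType.
Implicit Types (b g : IP R) (p q : R * R) (x y : R) (P Q : set (R * R)).

Lemma pairwise_uniq (l : seq (R * R)) : pairwise (fun p q => p.1 < q.1) l -> uniq l.
Proof.
elim: l => //= p l IH /andP [hp hl]; rewrite IH // andbT; apply/negP => pl.
by move: (allP hp p pl); rewrite ltxx.
Qed.

Lemma mR_split b P S : P `<=` blocks b -> S `<=` P ->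
  mR P = mR S + mR [set p | P p /\ ~ S p].
Proof.
move=> Pb SP; rewrite -(mR_U (b := b)).
- congr mR; apply/seteqP; split => p.
    by move=> Pp; have [Sp|nSp] := pselect (S p); [left|right].
  by case => [/SP|[]].
- exact: subset_trans SP Pb.
- by move=> p [/Pb].
- by apply/seteqP; split => // p [Sp [_ nSp]].
Qed.

Lemma last_map_mem (f : (R * R) * (R * R) -> R) (l : seq ((R * R) * (R * R))) :
  last 0 [seq f j | j <- l] = 0 \/ exists2 j, j \in l & last 0 [seq f j | j <- l] = f j.
Proof.
have := mem_last 0 [seq f j | j <- l]; rewrite inE => /orP [/eqP ->|/mapP [j js ->]].
  by apply: or_introl.
by apply: or_intror; exists j.
Qed.

Lemma last_max b g (l : seq ((R * R) * (R * R))) :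
  (forall j, j \in l -> blocks b j.1 /\ blocks g j.2) -> pairwise (@corr_lt R) l ->
  forall j, j \in l -> j.1.2 <= last 0 [seq j.1.2 | j <- l] /\
                       j.2.2 <= last 0 [seq j.2.2 | j <- l].
Proof.
case/lastP: l => // l jl hbl; rewrite -cats1 pairwise_cat => /and3P [hall _ _] j.
rewrite !map_cat !last_cat /= mem_cat inE => /orP [jl'|/eqP ->]; last by rewrite !lexx.
have := (allrelP hall) j jl jl' (mem_head _ _) => /andP [h1 h2].
have [bj1 bj2] : blocks b j.1 /\ blocks g j.2 by apply: hbl; rewrite mem_rcons inE jl' orbT.
have [bl1 bl2] : blocks b jl.1 /\ blocks g jl.2 by apply: hbl; rewrite mem_rcons mem_head.
have [_ l1 _] := blk_sub bl1; have [_ l2 _] := blk_sub bl2.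
split.
  exact: le_trans (blk_sep bj1 bl1 h1) (ltW l1).
exact: le_trans (blk_sep bj2 bl2 h2) (ltW l2).
Qed.

Lemma mR_fst b g (l : seq ((R * R) * (R * R))) :
  (forall j, j \in l -> blocks b j.1 /\ blocks g j.2) -> pairwise (@corr_lt R) l ->
  mR [set` [seq j.1 | j <- l]] = \sum_(j <- l) blen j.1.
Proof.
move=> hbl hp; rewrite (mR_list (b := b)).
- by rewrite big_map.
- by move=> p /mapP [j jl ->]; case: (hbl j jl).
- apply: pairwise_uniq; rewrite pairwise_map; apply: sub_pairwise hp.
  by move=> u v /andP [].
Qed.

Lemma mR_snd b g (l : seq ((R * R) * (R * R))) :
  (forall j, j \in l -> blocks b j.1 /\ blocks g j.2) -> pairwise (@corr_lt R) l ->
  mR [set` [seq j.2 | j <- l]] = \sum_(j <- l) blen j.2.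
Proof.
move=> hbl hp; rewrite (mR_list (b := g)).
- by rewrite big_map.
- by move=> p /mapP [j jl ->]; case: (hbl j jl).
- apply: pairwise_uniq; rewrite pairwise_map; apply: sub_pairwise hp.
  by move=> u v /andP [].
Qed.

Lemma corr_close b g s x : correspondence b g s -> Cset b x ->
  exists y, Cset g y /\ `|x - y| <= 3 * hdis b g s.
Proof.
move=> hc Cx.
have hpw := corr_pairwise hc.
have [hbl _] := hc.
have hb1 : forall j, j \in s -> blocks b j.1 by move=> j /hbl [].
have hb2 : forall j, j \in s -> blocks g j.2 by move=> j /hbl [].
have [_ nCx] := (CsetP b x).1 Cx.
have /andP [x0 xL] := Cset_range Cx.
pose a := fun j : (R * R) * (R * R) => x <= j.1.1.
pose k := find a s.
pose s1 := take k s; pose s2 := drop k s.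
have es : s = s1 ++ s2 by rewrite cat_take_drop.
have ins1 : forall j, j \in s1 -> j \in s by move=> j js1; rewrite es mem_cat js1.
have ins2 : forall j, j \in s2 -> j \in s by move=> j js2; rewrite es mem_cat js2 orbT.
have hs1 : forall j, j \in s1 -> j.1.2 <= x.
  move=> j js1; have := allP (all_take_find a s) j js1; rewrite /= /a -ltNge => jx.
  rewrite leNgt; apply/negP => xj; apply: (nCx j.1 (hb1 j (ins1 j js1))).
  by apply/ointP; rewrite jx xj.
have hs2 : forall j, j \in s2 -> x <= j.1.1.
  apply/allP; apply: (all_drop_find (r := @corr_lt R)) => //.
  by move=> u v; rewrite /a => xu /andP [uv _]; apply: le_trans xu (ltW uv).
have hp' : pairwise (@corr_lt R) (s1 ++ s2) by rewrite -es.
move: hp'; rewrite pairwise_cat => /and3P [hall hp1 hp2].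
have hbl1 : forall j, j \in s1 -> blocks b j.1 /\ blocks g j.2 by move=> j /ins1 /hbl.
pose ab := last 0 [seq j.1.2 | j <- s1].
pose ag := last 0 [seq j.2.2 | j <- s1].
have G3 := last_max hbl1 hp1.
have Cab : Cset b ab.
  rewrite /ab; case: (last_map_mem (fun j => j.1.2) s1) => [->|[j js ->]]; first exact: Cset0.
  by case: (Cset_end (hb1 j (ins1 j js))).
have Cag : Cset g ag.
  rewrite /ag; case: (last_map_mem (fun j => j.2.2) s1) => [->|[j js ->]]; first exact: Cset0.
  by case: (Cset_end (hb2 j (ins1 j js))).
have abx : ab <= x.
  by rewrite /ab; case: (last_map_mem (fun j => j.1.2) s1) => [->|[j js ->]] //; apply: hs1.
have G4b : forall j, j \in s2 -> ab <= j.1.1 by move=> j /hs2; apply: le_trans abx.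
have G4g : forall j, j \in s2 -> ag <= j.2.1.
  move=> j js2; rewrite /ag; case: (last_map_mem (fun j => j.2.2) s1) => [->|[j' js' ->]].
    by have [] := blk_sub (hb2 j (ins2 j js2)).
  have := (allrelP hall) j' j js' js2 => /andP [_ h2].
  exact: blk_sep (hb2 j' (ins1 j' js')) (hb2 j (ins2 j js2)) h2.
pose M1 := [set` [seq j.1 | j <- s]]; pose M2 := [set` [seq j.2 | j <- s]].
have M1b : M1 `<=` blocks b by move=> p /mapP [j js ->]; apply: hb1.
have M2b : M2 `<=` blocks g by move=> p /mapP [j js ->]; apply: hb2.
have mM1 : mR M1 = \sum_(j <- s) blen j.1 := mR_fst hbl hpw.
have mM2 : mR M2 = \sum_(j <- s) blen j.2 := mR_snd hbl hpw.
have E1 : x - ab <= ipL b - \sum_(j <- s) blen j.1.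
  rewrite -(mR_itv Cab Cx abx) -mM1; apply: mR_rest => //; first by move=> p [].
  apply/seteqP; split => // p [[bp [abp px]] /mapP [j js pj]].
  have [_ pl _] := blk_sub bp.
  move: js; rewrite es mem_cat => /orP [js1|js2].
    have := (G3 j js1).1; rewrite -pj => h.
    by move: (lt_le_trans pl (le_trans h abp)); rewrite ltxx.
  have := hs2 j js2; rewrite -pj => h.
  by move: (lt_le_trans pl (le_trans px h)); rewrite ltxx.
pose S1b := [set` [seq j.1 | j <- s1]].
pose Pb := [set p | blocks b p /\ 0 <= p.1 /\ p.2 <= ab].
have S1bP : S1b `<=` Pb.
  move=> p /mapP [j js1 ->]; have bj := hb1 j (ins1 j js1); split => //.
  by have [? _ _] := blk_sub bj; split => //; exact: (G3 j js1).1.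
have E2 : ab = \sum_(j <- s1) blen j.1 + mR [set p | Pb p /\ ~ S1b p].
  rewrite -(mR_fst hbl1 hp1) -(mR_split (b := b)) //; last by move=> p [].
  by rewrite /Pb (mR_itv (Cset0 b) Cab) ?subr0 //; case/andP: (Cset_range Cab).
have E2' : mR [set p | Pb p /\ ~ S1b p] <= ipL b - \sum_(j <- s) blen j.1.
  rewrite -mM1; apply: mR_rest => //; first by move=> p [[]].
  apply/seteqP; split => // p [[[bp [_ pab]] nS] /mapP [j js pj]].
  have [_ pl _] := blk_sub bp.
  move: js; rewrite es mem_cat => /orP [js1|js2].
    by apply: nS; apply/mapP; exists j.
  have := G4b j js2; rewrite -pj => h.
  by move: (lt_le_trans pl (le_trans pab h)); rewrite ltxx.
pose S1g := [set` [seq j.2 | j <- s1]].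
pose Pg := [set p | blocks g p /\ 0 <= p.1 /\ p.2 <= ag].
have S1gP : S1g `<=` Pg.
  move=> p /mapP [j js1 ->]; have bj := hb2 j (ins1 j js1); split => //.
  by have [? _ _] := blk_sub bj; split => //; exact: (G3 j js1).2.
have E3 : ag = \sum_(j <- s1) blen j.2 + mR [set p | Pg p /\ ~ S1g p].
  rewrite -(mR_snd hbl1 hp1) -(mR_split (b := g)) //; last by move=> p [].
  by rewrite /Pg (mR_itv (Cset0 g) Cag) ?subr0 //; case/andP: (Cset_range Cag).
have E3' : mR [set p | Pg p /\ ~ S1g p] <= ipL g - \sum_(j <- s) blen j.2.
  rewrite -mM2; apply: mR_rest => //; first by move=> p [[]].
  apply/seteqP; split => // p [[[bp [_ pag]] nS] /mapP [j js pj]].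
  have [_ pl _] := blk_sub bp.
  move: js; rewrite es mem_cat => /orP [js1|js2].
    by apply: nS; apply/mapP; exists j.
  have := G4g j js2; rewrite -pj => h.
  by move: (lt_le_trans pl (le_trans pag h)); rewrite ltxx.
exists ag; split => //.
have u0 := mR_ge0 [set p | Pb p /\ ~ S1b p].
have v0 := mR_ge0 [set p | Pg p /\ ~ S1g p].
have hsum : `|\sum_(j <- s1) blen j.1 - \sum_(j <- s1) blen j.2| <= dis_sum s.
  rewrite -sumrB; apply: le_trans (ler_norm_sum _ _ _) _.
  rewrite /dis_sum es big_cat /= lerDl; exact: sumr_ge0.
move: hsum; rewrite ler_norml => /andP [hs_lo hs_hi].
have h1 : dis1 b s <= hdis b g s by rewrite /hdis le_max lexx.
have h2 : dis2 g s <= hdis b g s by rewrite /hdis le_max lexx orbT.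
move: h1 h2; rewrite /dis1 /dis2 => h1 h2.
have ds0 := dis_sum_ge0 s.
rewrite ler_norml; apply/andP; split; lra.
Qed.

End Dir1.

Section Dir1b.
Variable R : realType.
Implicit Types (b g : IP R) (p q : R * R) (x y : R) (P Q : set (R * R)).

Definition swapc (s : seq ((R * R) * (R * R))) := [seq (j.2, j.1) | j <- s].

Lemma corr_swap b g s : correspondence b g s -> correspondence g b (swapc s).
Proof.
case=> hbl hs; split.
  by move=> j /mapP [j' js ->] /=; case: (hbl j' js).
rewrite /swapc sorted_map; apply: sub_sorted hs.
by move=> u v /andP [h1 h2]; apply/andP.
Qed.

Lemma hdis_swap b g s : hdis g b (swapc s) = hdis b g s.
Proof.
have hd : dis_sum (swapc s) = dis_sum s.
  by rewrite /dis_sum big_map; apply: eq_bigr => j _ /=; rewrite distrC.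
rewrite /hdis /dis1 /dis2 hd /swapc !big_map /= maxC.
by [].
Qed.

Lemma hdist_le (A B : set R) D : A !=set0 -> B !=set0 ->
  (forall x, A x -> exists y, B y /\ `|x - y| <= D) ->
  (forall y, B y -> exists x, A x /\ `|x - y| <= D) ->
  hdist_sets A B <= D.
Proof.
move=> [x0 Ax0] [y0 By0] hA hB; rewrite /hdist_sets ge_max; apply/andP; split.
- apply: ge_sup; first by exists (inf [set `|x0 - y| | y in B]); exists x0.
  move=> _ [x Ax <-]; have [y [By hxy]] := hA x Ax; apply: le_trans hxy.
  apply: ge_inf; first by exists 0 => _ [y' _ <-].
  by exists y.
- apply: ge_sup; first by exists (inf [set `|x - y0| | x in A]); exists y0.
  move=> _ [y By <-]; have [x [Ax hxy]] := hB y By; apply: le_trans hxy.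
  apply: ge_inf; first by exists 0 => _ [x' _ <-].
  by exists x.
Qed.

Lemma hdist_lt (A B : set R) M d : A !=set0 -> B !=set0 ->
  (forall x, A x -> 0 <= x <= M) -> (forall y, B y -> 0 <= y <= M) ->
  hdist_sets A B < d ->
  (forall x, A x -> exists y, B y /\ `|x - y| < d) /\
  (forall y, B y -> exists x, A x /\ `|x - y| < d).
Proof.
move=> [x0 Ax0] [y0 By0] hAM hBM; rewrite /hdist_sets gt_max => /andP [h1 h2].
have nM : forall x y, A x -> B y -> `|x - y| <= M.
  move=> x y /hAM /andP [? ?] /hBM /andP [? ?]; rewrite ler_norml; apply/andP; split; lra.
split.
- move=> x Ax.
  have : inf [set `|x - y| | y in B] < d.
    apply: le_lt_trans h1; apply: ub_le_sup; last by exists x.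
    exists M => _ [x' Ax' <-]; apply: le_trans (nM x' y0 Ax' By0).
    apply: ge_inf; first by exists 0 => _ [y' _ <-].
    by exists y0.
  move/(inf_lt (ex_intro _ `|x - y0| (ex_intro2 _ _ y0 By0 erefl))) => [_ [y By <-] hy].
  by exists y.
- move=> y By.
  have : inf [set `|x - y| | x in A] < d.
    apply: le_lt_trans h2; apply: ub_le_sup; last by exists y.
    exists M => _ [y' By' <-]; apply: le_trans (nM x0 y' Ax0 By').
    apply: ge_inf; first by exists 0 => _ [x' _ <-].
    by exists x0.
  move/(inf_lt (ex_intro _ `|x0 - y| (ex_intro2 _ _ x0 Ax0 erefl))) => [_ [x Ax <-] hx].
  by exists x.
Qed.

Lemma dH_le b g D :
  (forall x, Cset b x -> exists y, Cset g y /\ `|x - y| <= D) ->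
  (forall y, Cset g y -> exists x, Cset b x /\ `|x - y| <= D) ->
  dH b g <= D.
Proof.
by apply: hdist_le; [exists 0; exact: Cset0|exists 0; exact: Cset0].
Qed.

Lemma dH_lt b g d : dH b g < d ->
  (forall x, Cset b x -> exists y, Cset g y /\ `|x - y| < d) /\
  (forall y, Cset g y -> exists x, Cset b x /\ `|x - y| < d).
Proof.
apply: (hdist_lt (M := ipL b + ipL g)); [exists 0; exact: Cset0|exists 0; exact: Cset0| |].
- move=> x /Cset_range /andP [? ?]; have := ipL_ge0 g; move=> ?; apply/andP; split; lra.
- move=> x /Cset_range /andP [? ?]; have := ipL_ge0 b; move=> ?; apply/andP; split; lra.
Qed.

Lemma corr_set_nonempty b g (f : seq ((R * R) * (R * R)) -> R) :
  [set f s | s in correspondence b g] !=set0.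
Proof. by exists (f [::]); exists [::] => //; exact: corr_nil. Qed.

Lemma dH'_le_hdis b g s : correspondence b g s -> dH' b g <= hdis b g s.
Proof.
move=> hc; apply: ge_inf; last by exists s.
by exists 0 => _ [s' hs' <-]; exact: hdis_ge0 hs'.
Qed.

Lemma dH'_dH b g e : dH' b g < e -> dH b g < 3 * e.
Proof.
move/(inf_lt (corr_set_nonempty b g (hdis b g))) => [_ [s hc <-] hs].
apply: le_lt_trans (_ : dH b g <= 3 * hdis b g s) _; last first.
  by rewrite ltr_pM2l.
apply: dH_le.
- by move=> x Cx; exact: corr_close hc Cx.
- move=> y Cy; have [x [Cx hx]] := corr_close (corr_swap hc) Cy.
  by exists x; split => //; rewrite distrC -(hdis_swap b g s).
Qed.

Lemma hdis_le_adis a b g s : hdis b g s <= adis a b g s.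
Proof. by rewrite /adis le_max; apply/orP; apply: or_introl; rewrite le_max lexx. Qed.

Lemma dH'_le_dalpha a b g : dH' b g <= dalpha a b g.
Proof.
apply: lb_le_inf; first exact: corr_set_nonempty.
move=> _ [s hc <-]; apply: le_trans (dH'_le_hdis hc) _; exact: hdis_le_adis.
Qed.

End Dir1b.

Section Dir2.
Variable R : realType.
Implicit Types (b g : IP R) (p q : R * R) (x y : R) (P Q : set (R * R)).

Lemma sum_cst (l : seq (R * R)) (c : R) : \sum_(p <- l) c = (size l)%:R * c.
Proof.
elim: l => [|p l IH]; first by rewrite big_nil mul0r.
by rewrite big_cons IH /= -add1n natrD mulrDl mul1r.
Qed.

Definition Bn b (n : nat) := [set p | blocks b p /\ n.+1%:R^-1 < blen p].

Lemma Bn_sub b n : Bn b n `<=` blocks b.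
Proof. by move=> p []. Qed.

Lemma Bn_finite b n : finite_set (Bn b n).
Proof.
apply: contrapT => /infinite_set_fset.
pose K := Num.Def.archi_bound (ipL b).
have hK : ipL b < K%:R by apply: archi_boundP; exact: ipL_ge0.
move=> /(_ (n.+1 * K)%N) [B BS hB].
have hl : forall p, p \in enum_fset B -> blocks b p by move=> p pB; apply: (Bn_sub (BS p pB)).
have := mR_list hl (fset_uniq B).
have -> : [set` enum_fset B] = [set` B] by [].
move=> hm.
have : mR [set` B] <= ipL b.
  rewrite -(mR_all b); apply: (mR_mono (b := b)) => //; move=> p /BS []//.
rewrite hm => hle.
have hlow : (#|` B|%:R * n.+1%:R^-1) <= \sum_(p <- enum_fset B) blen p.
  rewrite -sum_cst !big_seq; apply: ler_sum => p pB; apply: ltW; have [] := BS p pB => //.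
have : (n.+1 * K)%:R * n.+1%:R^-1 <= ipL b.
  apply: le_trans _ hle; apply: le_trans _ hlow; apply: ler_wpM2r; first by rewrite invr_ge0.
  by rewrite ler_nat.
rewrite natrM mulrC mulrA mulVf ?mul1r ?pnatr_eq0 // => hKL.
by move: (lt_le_trans hK hKL); rewrite ltxx.
Qed.

Lemma sorted_strict b (l : seq (R * R)) : (forall p, p \in l -> blocks b p) -> uniq l ->
  sorted (fun p q => p.1 <= q.1) l -> pairwise (fun p q => p.1 < q.1) l.
Proof.
move=> hb ul; rewrite sorted_pairwise; last by move=> y x z h1 h2; exact: le_trans h1 h2.
elim: l hb ul => //= p l IH hb /andP [pl ul] /andP [hp hl].
apply/andP; split; last by apply: IH => // q ql; apply: hb; rewrite inE ql orbT.
apply/allP => q ql; have := allP hp q ql; rewrite le_eqVlt => /orP [/eqP e|//].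
exfalso; have bq : blocks b q by apply: hb; rewrite inE ql orbT.
have e' : p = q := blk_eq1 (hb p (mem_head _ _)) bq e.
by move: pl; rewrite e' ql.
Qed.

Lemma big_list b e : 0 < e -> exists l : seq (R * R),
  [/\ forall p, p \in l -> blocks b p, pairwise (fun p q => p.1 < q.1) l &
      ipL b - e < \sum_(p <- l) blen p].
Proof.
move=> e0.
pose F := fun n => ublk (Bn b n).
have ndF : {homo F : n m / (n <= m)%N >-> (n <= m)%O}.
  move=> n m nm; rewrite subsetEset => x [p [bp hp] px]; exists p => //; split => //.
  apply: le_lt_trans hp; rewrite lef_pV2 ?posrE ?ltr0n // ler_nat; exact: nm.
have eU : \bigcup_n F n = ublk (blocks b).
  apply/seteqP; split => x.
    by move=> [n _ [p [bp _] px]]; exists p.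
  move=> [p bp px]; have [_ pl _] := blk_sub bp.
  have lp : 0 < blen p by rewrite /blen subr_gt0.
  pose n := Num.Def.archi_bound (blen p)^-1.
  have hn : (blen p)^-1 < n%:R by apply: archi_boundP; rewrite invr_ge0 ltW.
  exists n => //; exists p => //; split => //.
  rewrite invf_plt ?posrE ?ltr0n //; apply: lt_trans hn _; rewrite ltr_nat; exact: ltnSn.
have hcv := nondecreasing_cvg_mu (mu := @lebesgue_measure R) (fun n => ublk_meas (Bn b n))
   (ltac:(rewrite eU; exact: ublk_meas)) ndF.
have hhomo : {homo (@lebesgue_measure R \o F) : n m / (n <= m)%N >-> (n <= m)%E}.
  move=> n m nm; apply: (le_measure (@lebesgue_measure R) (ublk_meas_in _) (ublk_meas_in _)).
  by have := ndF n m nm; rewrite subsetEset.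
have hsup := ereal_nondecreasing_cvgn hhomo.
have hL : @lebesgue_measure R (ublk (blocks b)) = ereal_sup (range (@lebesgue_measure R \o F)).
  rewrite -eU; exact: (cvg_unique (@ereal_hausdorff R) hcv hsup).
have : ((ipL b - e)%:E < ereal_sup (range (@lebesgue_measure R \o F)))%E.
  by rewrite -hL (_ : @lebesgue_measure R (ublk (blocks b)) = mass (blocks b)) // mass_all lte_fin ltrBlDr ltrDl.
move/ereal_sup_gt => [_ [n _ <-]] /= hn.
have [X eX] := (finite_fsetP (A := Bn b n)).1 (Bn_finite b n).
pose l := sort (fun p q : R * R => p.1 <= q.1) (enum_fset X).
have hbl : forall p, p \in l -> blocks b p.
  move=> p; rewrite mem_sort => pX; have : Bn b n p by rewrite eX.
  by case.
have ul : uniq l by rewrite sort_uniq; exact: fset_uniq.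
exists l; split => //.
  apply: (sorted_strict hbl ul); apply: sort_sorted => p q; exact: le_total.
rewrite -(mR_list hbl ul).
have -> : [set` l] = Bn b n.
  by rewrite eX; apply/seteqP; split => p /=; rewrite mem_sort.
rewrite -lte_fin /mR -(mass_fin (Bn_sub (b := b) (n := n))); exact: hn.
Qed.

End Dir2.

Section Dir2b.
Variable R : realType.
Implicit Types (b g : IP R) (p q : R * R) (x y : R) (P Q : set (R * R)).

Lemma nCset_split b U z : blocks b U -> Cset b z -> z <= U.1 \/ U.2 <= z.
Proof.
move=> bU Cz; have [_ nC] := (CsetP b z).1 Cz.
case: (leP z U.1) => h1; first by apply: or_introl.
case: (leP U.2 z) => h2; first by apply: or_intror.
by exfalso; apply: (nC U bU); apply/ointP; rewrite h1 h2.
Qed.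

Lemma match_block b g d U : blocks b U -> 0 < d -> 4 * d <= blen U ->
  (forall x, Cset b x -> exists y, Cset g y /\ `|x - y| < d) ->
  (forall y, Cset g y -> exists x, Cset b x /\ `|x - y| < d) ->
  exists V, [/\ blocks g V, `|V.1 - U.1| <= d & `|V.2 - U.2| <= d].
Proof.
move=> bU d0 hU hA hB.
have [U0 Ul UL] := blk_sub bU.
move: hU; rewrite /blen => hU.
pose m := (U.1 + U.2) / 2.
have hm1 : m = U.1 + (U.2 - U.1) / 2 by rewrite /m; field.
have hm2 : m = U.2 - (U.2 - U.1) / 2 by rewrite /m; field.
have [y [Cy hy]] := hA _ (CsetL b).
have /andP [y0 yL] := Cset_range Cy.
move: hy; rewrite ltr_norml => /andP [hy1 hy2].
have m0 : 0 <= m <= ipL g by apply/andP; split; lra.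
have nCm : ~ Cset g m.
  move=> Cm; have [x [Cx hx]] := hB _ Cm; move: hx; rewrite ltr_norml => /andP [hx1 hx2].
  by case: (nCset_split bU Cx) => h; lra.
have [V [bV /ointP /andP [Vm mV]]] := notC_blk m0 nCm.
have [CV1 CV2] := Cset_end bV; have [CU1 CU2] := Cset_end bU.
exists V; split => //; rewrite ler_norml; apply/andP; split.
- rewrite lerBrDl; rewrite leNgt; apply/negP => hV.
  have [w [Cw hw]] := hA _ CU1; move: hw; rewrite ltr_norml => /andP [hw1 hw2].
  have [_ nCw] := (CsetP g w).1 Cw; apply: (nCw V bV); apply/ointP; apply/andP; split; lra.
- have [z [Cz hz]] := hB _ CV1; move: hz; rewrite ltr_norml => /andP [hz1 hz2].
  by case: (nCset_split bU Cz) => h; lra.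
- have [z [Cz hz]] := hB _ CV2; move: hz; rewrite ltr_norml => /andP [hz1 hz2].
  by case: (nCset_split bU Cz) => h; lra.
- rewrite lerBlDl; rewrite leNgt; apply/negP => hV.
  have [w [Cw hw]] := hA _ CU2; move: hw; rewrite ltr_norml => /andP [hw1 hw2].
  have [_ nCw] := (CsetP g w).1 Cw; apply: (nCw V bV); apply/ointP; apply/andP; split; lra.
Qed.

Definition minlen (l : seq (R * R)) := foldr (fun p acc => Num.min (blen p) acc) 1 l.

Lemma minlen_pos b l : (forall p, p \in l -> blocks b p) -> 0 < minlen l.
Proof.
elim: l => //= p l IH hb; rewrite lt_min; apply/andP; split.
  by have [_ pl _] := blk_sub (hb p (mem_head _ _)); rewrite /blen subr_gt0.
by apply: IH => q ql; apply: hb; rewrite inE ql orbT.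
Qed.

Lemma minlen_le l p : p \in l -> minlen l <= blen p.
Proof.
elim: l => //= q l IH; rewrite inE => /orP [/eqP ->|pl]; rewrite ge_min.
  by rewrite lexx.
by rewrite IH ?orbT.
Qed.

Lemma dH_dH' b e : 0 < e -> exists d, 0 < d /\ forall g, dH b g < d -> dH' b g < e.
Proof.
move=> e0.
have e30 : 0 < e / 3 by rewrite divr_gt0.
have [l [hbl hpl hS]] := big_list b e30.
pose k := size l.
pose c := minlen l.
have c0 : 0 < c := minlen_pos hbl.
have k0 : 0 <= k%:R :> R by [].
pose d := Num.min (c / 4) (e / (3 * (4 * k%:R + 1))).
have hpos : 0 < 3 * (4 * k%:R + 1) :> R.
  by rewrite mulr_gt0 // ltr_wpDl // mulr_ge0.
have d0 : 0 < d by rewrite lt_min !divr_gt0.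
have hdc : 4 * d <= c.
  have : d <= c / 4 by rewrite ge_min lexx.
  by rewrite ler_pdivlMr // mulrC.
have hde : 12 * (k%:R * d) + 3 * d <= e.
  have : d <= e / (3 * (4 * k%:R + 1)) by rewrite ge_min lexx orbT.
  rewrite ler_pdivlMr // => h.
  have E : 12 * (k%:R * d) + 3 * d = d * (3 * (4 * k%:R + 1)) by ring.
  by rewrite E.
exists d; split => // g /dH_lt [hA hB].
have hch : forall U, exists V, U \in l ->
    [/\ blocks g V, `|V.1 - U.1| <= d & `|V.2 - U.2| <= d].
  move=> U; case: (boolP (U \in l)) => Ul; last by exists U.
  have bU := hbl U Ul.
  have [V hV] := match_block bU d0 (le_trans hdc (minlen_le Ul)) hA hB.
  by exists V.
have [f hf] := choice hch.
pose s := [seq (U, f U) | U <- l].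
have hc : correspondence b g s.
  split.
    by move=> j /mapP [U Ul ->] /=; split; [apply: hbl|case: (hf U Ul)].
  rewrite /s sorted_map; apply: pairwise_sorted.
  apply: (sub_in_pairwise (P := mem l)) hpl; last by apply/allP.
  move=> U U' Ul U'l hUU'; apply/andP; split => //=.
  have [_ hU1 _] := hf U Ul; have [_ hU'1 _] := hf U' U'l.
  have hsep := blk_sep (hbl U Ul) (hbl U' U'l) hUU'.
  have hbU := le_trans hdc (minlen_le Ul).
  move: hU1 hU'1 hbU; rewrite /blen !ler_norml => /andP [? ?] /andP [? ?] ?; lra.
apply: le_lt_trans (dH'_le_hdis hc) _.
have [x [Cx hx]] := hB _ (CsetL g).
have /andP [_ xL] := Cset_range Cx.
move: hx; rewrite ltr_norml => /andP [hx1 hx2].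
have hD : \sum_(U <- l) `|blen U - blen (f U)| <= k%:R * (2 * d).
  rewrite -sum_cst !big_seq; apply: ler_sum => U Ul.
  have [_ h1 h2] := hf U Ul; move: h1 h2; rewrite /blen !ler_norml.
  by move=> /andP [? ?] /andP [? ?]; apply/andP; split; lra.
have hST : \sum_(U <- l) blen U - \sum_(U <- l) blen (f U) <=
    \sum_(U <- l) `|blen U - blen (f U)|.
  by rewrite -sumrB; apply: ler_sum => U _; exact: ler_norm.
rewrite /hdis /dis1 /dis2 /dis_sum /s !big_map /= gt_max.
move: hD; rewrite mulrCA => hD.
apply/andP; split; lra.
Qed.

End Dir2b.

Section GridPt.
Variable R : realType.

Lemma sum_cstT (T : Type) (l : seq T) (c : R) : \sum_(j <- l) c = (size l)%:R * c.
Proof.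
elim: l => [|p l IH]; first by rewrite big_nil mul0r.
by rewrite big_cons IH /= -add1n natrD mulrDl mul1r.
Qed.

Lemma grid_point (d : R) (hd : 0 < d) (n : nat) x : 0 <= x <= n%:R * d ->
  exists k, (k <= n)%N /\ (x = k%:R * d \/ ((k < n)%N /\ k%:R * d < x < k.+1%:R * d)).
Proof.
elim: n x => [|n IH] x.
  rewrite mul0r => /andP [h1 h2]; exists 0%N; split => //; apply: or_introl.
  by rewrite mul0r; apply/eqP; rewrite eq_le h1 h2.
move=> /andP [x0 xn].
case: (leP x (n%:R * d)) => h.
  have [k [kn hk]] := IH x (ltac:(by rewrite x0 h)).
  exists k; split; first by apply: leq_trans kn (leqnSn n).
  case: hk => [->|[kn' hk]]; first by apply: or_introl.
  by apply: or_intror; split => //; apply: ltn_trans kn' (ltnSn n).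
case: (eqVneq x (n.+1%:R * d)) => [->|hne].
  by exists n.+1; split => //; apply: or_introl.
exists n; split; first exact: leqnSn.
apply: or_intror; split; first exact: ltnSn.
by rewrite h /= lt_neqAle hne xn.
Qed.

End GridPt.

Section Grid.
Variable R : realType.
Variables (d : R) (hd : 0 < d) (n : nat).

Definition gblk : set (R * R) :=
  [set p | exists2 k : nat, (k < n)%N & p = (k%:R * d, k.+1%:R * d)].

Lemma gL_ge0 : 0 <= n%:R * d.
Proof. by rewrite mulr_ge0 // ltW. Qed.

Lemma g_sub p : gblk p -> 0 <= p.1 /\ p.1 < p.2 /\ p.2 <= n%:R * d.
Proof.
move=> [k kn ->] /=; split; first by rewrite mulr_ge0 // ltW.
by split; [rewrite ltr_pM2r // ltr_nat|rewrite ler_pM2r // ler_nat].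
Qed.

Lemma g_disj p q : gblk p -> gblk q -> p <> q -> oint p `&` oint q = set0.
Proof.
move=> [k kn ->] [j jn ->] neq; apply/seteqP; split => // x [/ointP /andP [h1 h2] /ointP /andP [h3 h4]].
apply: neq; have kj : k = j.
  have a1 := lt_trans h1 h4; rewrite ltr_pM2r // ltr_nat in a1.
  have a2 := lt_trans h3 h2; rewrite ltr_pM2r // ltr_nat in a2.
  rewrite ltnS in a1; rewrite ltnS in a2; by apply/eqP; rewrite eqn_leq a1 a2.
by rewrite kj.
Qed.

Lemma g_cover : (@lebesgue_measure R).-negligible
  (`[0, n%:R * d]%classic `\` \bigcup_(p in gblk) oint p).
Proof.
apply: (negligibleS (mu := @lebesgue_measure R) (A := \bigcup_k [set k%:R * d])).
  move=> x [/= + nx]; rewrite in_itv /= => hx.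
  have [k [kn [->|[kn' hk]]]] := grid_point hd hx; first by exists k.
  by exfalso; apply: nx; exists (k%:R * d, k.+1%:R * d); [exists k|apply/ointP].
apply: negligible_bigcup => k.
by apply/negligibleP; [exact: measurable_set1|exact: lebesgue_measure_set1].
Qed.

Definition grid : IP R := @mkIP R (n%:R * d) gblk gL_ge0 g_sub g_disj g_cover.

End Grid.

Section GridProps.
Variable R : realType.

Lemma fset_set_sub' (T : choiceType) (A : set T) : [set` fset_set A] `<=` A.
Proof.
case: (pselect (finite_set A)) => [fA|nfA]; first by rewrite fset_setK.
by rewrite /fset_set; case: pselect => // _ x /=; rewrite inE.
Qed.

Lemma nblocks_le (b : IP R) h t c : 0 < c -> (forall p, blocks b p -> c <= blen p) ->
  (nblocks b h t)%:R * c <= ipL b.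
Proof.
move=> c0 hc; rewrite /nblocks.
set X := fset_set _.
have XA : [set` X] `<=` blocks b by move=> p /fset_set_sub' [].
have hl : forall p, p \in enum_fset X -> blocks b p by move=> p hp; apply: XA.
have hm := mR_list hl (fset_uniq X).
have : mR [set` enum_fset X] <= ipL b.
  rewrite -(mR_all b); apply: (mR_mono (b := b)) => //.
rewrite hm; apply: le_trans.
rewrite -sum_cstT !big_seq; apply: ler_sum => p pX; apply: hc; exact: hl.
Qed.

Lemma diverse_of (a : R) (b : IP R) c : 0 < a -> 0 < c ->
  (forall p, blocks b p -> c <= blen p) -> diverse a b.
Proof.
move=> a0 c0 hc t _; exists 0.
apply: (@squeeze_cvgr _ _ _ _ (fun _ => 0) (fun h => h `^ a * (ipL b / c))).
- apply: nearW => h; rewrite /div_fun; apply/andP; split.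
    by rewrite mulr_ge0 // powR_ge0.
  apply: ler_wpM2l; first exact: powR_ge0.
  by rewrite ler_pdivlMr //; exact: nblocks_le.
- exact: cvg_cst.
- have h := powR_cvg0 a0; have := cvgMl (b := ipL b / c) h.
  by rewrite mul0r => H; exact: H.
Qed.

Variables (d : R) (hd : 0 < d) (n : nat).

Lemma grid_blen p : blocks (@grid R d hd n) p -> blen p = d.
Proof. by move=> [k kn ->]; rewrite /blen /= mulrSr mulrDl mul1r addrAC subrr add0r. Qed.

Lemma grid_C k : (k <= n)%N -> Cset (@grid R d hd n) (k%:R * d).
Proof.
move=> kn; apply/CsetP; split.
  apply/andP; split; first by rewrite mulr_ge0 // ltW.
  by rewrite /grid /= ler_pM2r // ler_nat.
move=> p [j jn ->] /ointP /andP [/= h1 h2].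
rewrite ltr_pM2r // ltr_nat in h1; rewrite ltr_pM2r // ltr_nat ltnS in h2.
by move: (leq_trans h1 h2); rewrite ltnn.
Qed.

Lemma grid_near x : 0 <= x <= n%:R * d ->
  exists y, Cset (@grid R d hd n) y /\ `|x - y| <= d.
Proof.
move=> hx; have [k [kn [->|[kn' /andP [h1 h2]]]]] := grid_point hd hx.
  by exists (k%:R * d); split; [exact: grid_C|rewrite subrr normr0 ltW].
exists (k%:R * d); split; first exact: grid_C.
move: h2; rewrite mulrSr mulrDl mul1r => h2.
by rewrite ler_norml; apply/andP; split; lra.
Qed.

End GridProps.

Section Part1.
Variable R : realType.

Lemma part1 (al : R) (a0 : 0 < al) (eps : R) (e0 : 0 < eps) :
  exists b g : IP R, diverse al b /\ diverse al g /\
       dH b g < eps /\ dalpha al b g > 1 / eps.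
Proof.
pose dl := eps / 4.
have hdl : 0 < dl by rewrite divr_gt0.
have h2dl : 0 < 2 * dl by rewrite mulr_gt0.
pose m := Num.Def.archi_bound (1 / (eps * dl)).
have hm : 1 / (eps * dl) < m%:R.
  by apply: archi_boundP; rewrite divr_ge0 // mulr_ge0 // ltW.
pose b := grid hdl (2 * m)%N; pose g := grid h2dl m.
have Lb : ipL b = (2 * m)%:R * dl by [].
have Lg : ipL g = m%:R * (2 * dl) by [].
have LbLg : ipL b = ipL g by rewrite Lb Lg natrM; ring.
exists b, g; split.
  apply: (diverse_of (c := dl)) => // p bp; rewrite (grid_blen bp).
  by [].
split.
  apply: (diverse_of (c := 2 * dl)) => // p bp; rewrite (grid_blen bp).
  by [].
split.
  apply: (le_lt_trans (y := 2 * dl)); last by rewrite /dl; lra.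
  apply: dH_le.
    move=> x /Cset_range hx; apply: (grid_near h2dl).
    by rewrite -Lg -LbLg.
  move=> y /Cset_range hy.
  have [x [Cx hx]] := @grid_near R dl hdl (2 * m)%N y (ltac:(by rewrite -Lb LbLg)).
  by exists x; split => //; rewrite distrC; apply: le_trans hx _; lra.
have key : forall s, correspondence b g s -> m%:R * dl <= adis al b g s.
  move=> s hc; apply: le_trans (hdis_le_adis _ _ _ _).
  apply: le_trans (_ : dis2 g s <= _); last by rewrite /hdis le_max lexx orbT.
  have [hbl _] := hc.
  have e1 : dis_sum s = (size s)%:R * dl.
    rewrite /dis_sum (eq_big_seq (fun _ => dl)) ?sum_cstT // => j js.
    have [bj1 bj2] := hbl j js; rewrite (grid_blen bj1) (grid_blen bj2).
    have -> : dl - 2 * dl = - dl by ring.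
    by rewrite normrN gtr0_norm.
  have e2 : \sum_(j <- s) blen j.2 = (size s)%:R * (2 * dl).
    rewrite (eq_big_seq (fun _ => 2 * dl)) ?sum_cstT // => j js.
    by have [bj1 bj2] := hbl j js; rewrite (grid_blen bj2).
  have hsum := corr_sum2 hc; rewrite e2 Lg in hsum.
  rewrite /dis2 e1 e2 Lg.
  have E1 : (size s)%:R * (2 * dl) = 2 * ((size s)%:R * dl) by ring.
  have E2 : m%:R * (2 * dl) = 2 * (m%:R * dl) by ring.
  rewrite E1 E2 in hsum *; lra.
apply: (lt_le_trans (y := m%:R * dl)).
  have E : 1 / (eps * dl) = (1 / eps) / dl by field; apply/andP; split; apply: lt0r_neq0.
  by move: hm; rewrite E ltr_pdivrMr.
apply: lb_le_inf; first exact: corr_set_nonempty.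
by move=> _ [s hc <-]; exact: key.
Qed.

End Part1.

Theorem proposition3p5 (R : realType) (alpha : R) (halpha : 0 < alpha < 1) :
  (forall eps : R, 0 < eps ->
     exists b g : IP R, diverse alpha b /\ diverse alpha g /\
       dH b g < eps /\ dalpha alpha b g > 1 / eps) /\
  (forall b g : IP R, diverse alpha b -> diverse alpha g ->
       dH' b g <= dalpha alpha b g) /\
  (forall U : set (IP R), metric_open (@dH R) U <-> metric_open (@dH' R) U).
Proof.
have a0 : 0 < alpha by case/andP: halpha.
split; first by move=> eps e0; exact: part1.
split; first by move=> b g _ _; exact: dH'_le_dalpha.
move=> U; split => hU x Ux.
  have [e [e0 he]] := hU x Ux; exists (e / 3); split; first by rewrite divr_gt0.
  move=> y hy; apply: he; have := dH'_dH hy.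
  by have -> : 3 * (e / 3) = e by field.
have [e [e0 he]] := hU x Ux; have [d [d0 hd]] := dH_dH' x e0.
by exists d; split => // y hy; apply: he; exact: hd.
Qed.
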